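(* Let ${\mathbf{X}}\in\mathbb{R}_+^{m\times n}$ and let ${\mathbf{A}}\in\mathbb{R}^{k\times m}$ satisfy ${\mathbf{A}}{\mathbf{A}}^T={\mathbf{I}}_k$. Let ${\mathbf{U}}_0\in\mathbb{R}_+^{m\times r}$, ${\mathbf{V}}_0\in\mathbb{R}_+^{n\times r}$ be a minimizer of $\|{\mathbf{X}}-{\mathbf{U}}{\mathbf{V}}^T\|_F^2$ over ${\mathbf{U}}\in\mathbb{R}_+^{m\times r},{\mathbf{V}}\in\mathbb{R}_+^{n\times r}$, and set ${\mathbf{X}}_0={\mathbf{U}}_0{\mathbf{V}}_0^T$. Let $\lambda>0$ and let $(\tilde{\mathbf{U}},\tilde{\mathbf{V}})$ be any minimizer, over ${\mathbf{U}}\in\mathbb{R}_+^{m\times r},{\mathbf{V}}\in\mathbb{R}_+^{n\times r}$, of $$\|{\mathbf{A}}({\mathbf{X}}-{\mathbf{U}}{\mathbf{V}}^T)\|_F^2+\lambda\|P_{\mathbf{A}}^\perp{\mathbf{U}}{\mathbf{V}}^T\|_F^2,$$ where $P_{\mathbf{A}}^\perp={\mathbf{I}}_m-{\mathbf{A}}^T{\mathbf{A}}$. Then $\tilde{\mathbf{X}}:=\tilde{\mathbf{U}}\tilde{\mathbf{V}}^T$ satisfies $$\frac{\|{\mathbf{X}}-\tilde{\mathbf{X}}\|_F^2}{\|{\mathbf{X}}\|_F^2}\le c_\lambda\left[\frac{\|{\mathbf{X}}-{\mathbf{X}}_0\|_F^2}{\|{\mathbf{X}}\|_F^2}+\frac{\|P_{\mathbf{A}}^\perp{\mathbf{X}}\|_F^2}{\|{\mathbf{X}}\|_F^2}\right],\qquad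 c_\lambda=\max(2/\lambda,\,6,\,2\lambda+2).$$
   Context: $\mathbb{R}_+^{a\times b}$ denotes the set of $a\times b$ matrices with all entries nonnegative; ${\mathbf{X}}\neq 0$ is implicit in the ratios. $\|\cdot\|_F$ is the Frobenius norm. *)

(* Defs.v *)
From mathcomp Require Import all_boot all_order all_algebra.
Set Implicit Arguments. Unset Strict Implicit. Unset Printing Implicit Defensive.
Import Order.TTheory GRing.Theory Num.Theory.
Local Open Scope ring_scope.

Definition frob2 {R : numDomainType} {p q : nat} (M : 'M[R]_(p, q)) : R :=
  \sum_(i < p) \sum_(j < q) M i j ^+ 2.

Definition nonneg_mx {R : numDomainType} {p q : nat} (M : 'M[R]_(p, q)) : Prop :=
  forall i j, 0 <= M i j.

Definition projPerp {R : numDomainType} {k m : nat} (A : 'M[R]_(k, m)) : 'M[R]_m :=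
  1%:M - A^T *m A.

Definition penObj {R : numDomainType} {k m n r : nat} (A : 'M[R]_(k, m))
  (X : 'M[R]_(m, n)) (lam : R) (U : 'M[R]_(m, r)) (V : 'M[R]_(n, r)) : R :=
  frob2 (A *m (X - U *m V^T)) + lam * frob2 (projPerp A *m (U *m V^T)).

(* Main.v *)
Require Import Defs.
From mathcomp Require Import all_boot all_order all_algebra.
From mathcomp Require Import ring lra.
Import Order.TTheory GRing.Theory Num.Theory.
Local Open Scope ring_scope.

Section S.
Variable R : realFieldType.

Lemma frob2_tr p q (M : 'M[R]_(p, q)) : frob2 M = \tr (M^T *m M).
Proof.
rewrite /frob2 /mxtrace exchange_big; apply: eq_bigr => j _.
rewrite mxE; apply: eq_bigr => i _; by rewrite !mxE expr2.
Qed.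

Lemma frob2_ge0 p q (M : 'M[R]_(p, q)) : 0 <= frob2 M.
Proof. by apply: sumr_ge0 => i _; apply: sumr_ge0 => j _; apply: sqr_ge0. Qed.

Lemma frob2_sub p q (M N : 'M[R]_(p, q)) : frob2 (M - N) <= 2 * frob2 M + 2 * frob2 N.
Proof.
rewrite /frob2 !mulr_sumr -big_split /=; apply: ler_sum => i _.
rewrite !mulr_sumr -big_split /=; apply: ler_sum => j _.
rewrite !mxE; set a := M i j; set b := N i j; have := sqr_ge0 (a+b); nra.
Qed.

Lemma frob2_proj p q (Q : 'M[R]_p) (M : 'M[R]_(p, q)) :
  Q^T = Q -> Q *m Q = Q -> frob2 (Q *m M) = \tr (M^T *m (Q *m M)).
Proof.
move=> HT HQ; rewrite frob2_tr trmx_mul HT -mulmxA (mulmxA Q) HQ.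
by [].
Qed.
Lemma frob2_split k p q (A : 'M[R]_(k, p)) (M : 'M[R]_(p, q)) :
  A *m A^T = 1%:M ->
  frob2 M = frob2 (A *m M) + frob2 (projPerp A *m M).
Proof.
move=> HA.
have HT : (A^T *m A)^T = A^T *m A by rewrite trmx_mul trmxK.
have HP : (A^T *m A) *m (A^T *m A) = A^T *m A.
  by rewrite mulmxA -(mulmxA _ A) HA mulmx1.
have HT' : (projPerp A)^T = projPerp A by rewrite /projPerp linearB /= trmx1 HT.
have HP' : projPerp A *m projPerp A = projPerp A.
  by rewrite /projPerp mulmxBl !mulmxBr !mul1mx mulmx1 HP subrr subr0.
rewrite (@frob2_proj _ _ _ M HT' HP') frob2_tr.
have -> : frob2 (A *m M) = \tr (M^T *m (A^T *m A *m M)).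
  by rewrite frob2_tr trmx_mul !mulmxA.
rewrite /projPerp mulmxBl mul1mx mulmxBr linearB /=.
by rewrite addrC subrK.
Qed.

End S.

Theorem mainTheorem2 (R : realFieldType) (m n k r : nat)
  (X : 'M[R]_(m, n)) (A : 'M[R]_(k, m))
  (U0 : 'M[R]_(m, r)) (V0 : 'M[R]_(n, r))
  (Ut : 'M[R]_(m, r)) (Vt : 'M[R]_(n, r)) (lam : R) :
  nonneg_mx X -> X != 0 ->
  A *m A^T = 1%:M ->
  nonneg_mx U0 -> nonneg_mx V0 ->
  (forall (U : 'M[R]_(m, r)) (V : 'M[R]_(n, r)), nonneg_mx U -> nonneg_mx V ->
     frob2 (X - U0 *m V0^T) <= frob2 (X - U *m V^T)) ->
  0 < lam ->
  nonneg_mx Ut -> nonneg_mx Vt ->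
  (forall (U : 'M[R]_(m, r)) (V : 'M[R]_(n, r)), nonneg_mx U -> nonneg_mx V ->
     penObj A X lam Ut Vt <= penObj A X lam U V) ->
  frob2 (X - Ut *m Vt^T) / frob2 X <=
    Num.max (2 / lam) (Num.max 6 (2 * lam + 2)) *
    (frob2 (X - U0 *m V0^T) / frob2 X + frob2 (projPerp A *m X) / frob2 X).
Proof.
move=> _ _ HA nU0 nV0 _ lam0 _ _ Hopt.
have H1 := Hopt U0 V0 nU0 nV0; rewrite /penObj in H1.
set X0 := U0 *m V0^T in H1 *; set Xt := Ut *m Vt^T in H1 *.
set P := projPerp A in H1 *.
set c := Num.max _ _.
have Hg0 : frob2 (P *m X0) <= 2 * frob2 (P *m X) + 2 * frob2 (P *m (X - X0)).
  have -> : P *m X0 = P *m X - P *m (X - X0).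
    by rewrite [P *m (X - X0)]mulmxBr opprB addrC subrK.
  exact: frob2_sub.
have Hh : frob2 (P *m (X - Xt)) <= 2 * frob2 (P *m X) + 2 * frob2 (P *m Xt).
  by rewrite mulmxBr; exact: frob2_sub.
rewrite -mulrDl mulrA ler_wpM2r ?invr_ge0 ?frob2_ge0 //.
rewrite (@frob2_split _ _ _ _ A (X - Xt) HA) (@frob2_split _ _ _ _ A (X - X0) HA) -/P.
move: H1 Hg0 Hh.
set a := frob2 (A *m (X - Xt)); set b := frob2 (P *m Xt).
set e1 := frob2 (A *m (X - X0)); set e2 := frob2 (P *m (X - X0)).
set q := frob2 (P *m X); set g0 := frob2 (P *m X0); set h := frob2 (P *m (X - Xt)).
move=> H1 Hg0 Hh.
have a0 : 0 <= a by apply: frob2_ge0.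
have b0 : 0 <= b by apply: frob2_ge0.
have e10 : 0 <= e1 by apply: frob2_ge0.
have e20 : 0 <= e2 by apply: frob2_ge0.
have q0 : 0 <= q by apply: frob2_ge0.
have cd : 2 / lam <= c by rewrite le_max lexx.
have c6 : 6 <= c by rewrite le_max le_max lexx orbT.
have cl : 2 * lam + 2 <= c by rewrite le_max le_max lexx !orbT.
have S0 : 0 <= e1 + e2 + q by lra.
have HlS : lam * g0 <= lam * (2 * q + 2 * e2) by rewrite ler_wpM2l // ltW.
case: (leP 2 lam) => Hl.
  have Hb : 2 * b <= lam * b by rewrite ler_wpM2r.
  have Hc : (2 * lam + 2) * (e1 + e2 + q) <= c * (e1 + e2 + q) by rewrite ler_wpM2r.
  have : lam * e2 + lam * q <= lam * (e2 + q) by rewrite mulrDr.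
  nra.
set d := 2 / lam.
have dl : d * lam = 2 by rewrite /d mulrAC -mulrA divff ?mulr1 // gt_eqF.
have d1 : 1 <= d by rewrite /d ler_pdivlMr // mul1r ltW.
have key : d * a + 2 * b <= d * e1 + 2 * g0.
  have := ler_wpM2l (le_trans ler01 d1) H1.
  by rewrite !mulrDr !mulrA (mulrC d lam) -(mulrC d) dl.
have Ha : a <= d * a by rewrite ler_peMl.
have Hc1 : d * e1 <= c * e1 by rewrite ler_wpM2r.
have Hc2 : 6 * e2 <= c * e2 by rewrite ler_wpM2r.
have Hc3 : 6 * q <= c * q by rewrite ler_wpM2r.
rewrite !mulrDr; lra.
Qed.
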